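(* Let $\Phi_1,\dots,\Phi_N$ be quantum channels on $\mathcal L(\mathbb C^d)$ and $1\le K\le N$. For a subset $S\subseteq[N]$ with $|S|=K$ and orthonormal bases $\mathbf e=(\mathbf e^{(i)})_{i\in S}$ of $\mathbb C^d$, let $$\mathrm{val}(\mathbf\Phi,S,\mathbf e):=\min\{\operatorname{Tr}H:\ H \text{ Hermitian},\ H\ge G_{\Phi_i,\mathbf e^{(i)}}\ \forall i\in S\}.$$ If there exist at least one $K$-subset $S\subseteq[N]$ and bases $\mathbf e$ with $\mathrm{val}(\mathbf\Phi,S,\mathbf e)>d$, then $(\Phi_1,\dots,\Phi_N)$ is $(N,K)$-incompatible. If for every $K$-subset $S\subseteq[N]$ there exist bases $\mathbf e_S$ with $\mathrm{val}(\mathbf\Phi,S,\mathbf e_S)>d$, then $(\Phi_1,\dots,\Phi_N)$ is $(N,K)$-strong incompatible.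
   Context: A family of channels $(\Phi_i)_{i\in S}$ on $\mathcal L(\mathbb C^d)$ is compatible if there is a completely positive trace-preserving $\Lambda:\mathcal L(\mathbb C^d)\to\mathcal L((\mathbb C^d)^{\otimes |S|})$ whose marginal on the factor labelled $i$ is $\Phi_i$ for every $i\in S$. The $N$-tuple is $(N,K)$-incompatible if at least one $K$-subset of the channels is incompatible, and $(N,K)$-strong incompatible if all $K$-subsets are incompatible. For $X=\sum X_{ij}|i\rangle\langle j|$, $|X\rangle:=\sum X_{ij}|i\rangle\otimes|j\rangle$; for a channel $\Phi$ with Hilbert–Schmidt adjoint $\Phi^*$ and orthonormal basis $\mathbf e=(e_i)$, $G_{\Phi,\mathbf e}:=\sum_{i=1}^d |\Phi^*(|e_i\rangle\langle e_i|)\rangle\langle\Phi^*(|e_i\rangle\langle e_i|)|/\operatorname{Tr}\Phi^*(|e_i\rangle\langle e_i|)$ (zero-denominator terms omitted). *)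

(* Defs.v *)
From HB Require Import structures.
From mathcomp Require Import all_boot all_order all_algebra.
From mathcomp Require Import complex.
From mathcomp Require Import Rstruct.
From Stdlib Require Rdefinitions.
Set Implicit Arguments. Unset Strict Implicit. Unset Printing Implicit Defensive.
Import Order.TTheory GRing.Theory Num.Theory.
Local Open Scope ring_scope.

Notation C := (complex Rdefinitions.R).

(* Operators on a finite-dimensional Hilbert space C^B whose orthonormal basis
   is indexed by the finite type B, given by their matrix entries. *)
Definition opT (B : finType) := B -> B -> C.

Definition psdT (B : finType) (X : opT B) : Prop :=
  forall v : B -> C, 0 <= \sum_(i : B) \sum_(j : B) (v i)^* * X i j * v j.

Definition hermT (B : finType) (X : opT B) : Prop :=
  forall i j, X i j = (X j i)^*.

Definition trT (B : finType) (X : opT B) : C := \sum_(i : B) X i i.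

Definition lin_mapT (d : nat) (B : finType) (L : 'M[C]_d -> opT B) : Prop :=
  forall (a : C) (X Y : 'M[C]_d) i j, L (a *: X + Y) i j = a * L X i j + L Y i j.

Definition tp_mapT (d : nat) (B : finType) (L : 'M[C]_d -> opT B) : Prop :=
  forall X : 'M[C]_d, trT (L X) = \tr X.

(* complete positivity: L (x) id_n is positive for every n *)
Definition cp_mapT (d : nat) (B : finType) (L : 'M[C]_d -> opT B) : Prop :=
  forall (n : nat) (X : opT ('I_d * 'I_n)%type), psdT X ->
    psdT (fun p q : (B * 'I_n)%type =>
            L (\matrix_(a, b) X (a, p.2) (b, q.2)) p.1 q.1).

Definition cptpT (d : nat) (B : finType) (L : 'M[C]_d -> opT B) : Prop :=
  [/\ lin_mapT L, cp_mapT L & tp_mapT L].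

Definition channel (d : nat) (Phi : 'M[C]_d -> 'M[C]_d) : Prop :=
  cptpT (fun X => fun i j => Phi X i j).

(* Output space (C^d)^{(x)J}: basis indexed by {ffun J -> 'I_d}.
   Marginal on the factor labelled j0 = partial trace over all other factors. *)
Definition marginal (d : nat) (J : finType) (Y : opT {ffun J -> 'I_d}) (j0 : J)
  : 'M[C]_d :=
  \matrix_(a, b) \sum_(x : {ffun J -> 'I_d} | x j0 == a)
                 \sum_(y : {ffun J -> 'I_d} | (y j0 == b) &&
                        [forall j, (j != j0) ==> (x j == y j)]) Y x y.

Definition compatible (d : nat) (J : finType) (Phi : J -> 'M[C]_d -> 'M[C]_d)
  : Prop :=
  exists L : 'M[C]_d -> opT {ffun J -> 'I_d},
    cptpT L /\ forall (j : J) (X : 'M[C]_d), marginal (L X) j = Phi j X.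

Definition subfam (d N : nat) (Phi : 'I_N -> 'M[C]_d -> 'M[C]_d)
  (S : {set 'I_N}) : {i : 'I_N | i \in S} -> 'M[C]_d -> 'M[C]_d :=
  fun i => Phi (val i).
Arguments subfam {d N} Phi S.

Definition NK_incompatible (d N K : nat) (Phi : 'I_N -> 'M[C]_d -> 'M[C]_d)
  : Prop :=
  exists S : {set 'I_N}, #|S| = K /\ ~ compatible (subfam Phi S).

Definition NK_strong_incompatible (d N K : nat)
  (Phi : 'I_N -> 'M[C]_d -> 'M[C]_d) : Prop :=
  forall S : {set 'I_N}, #|S| = K -> ~ compatible (subfam Phi S).

(* Hilbert-Schmidt adjoint: Tr(Phi^*(Y)^dag X) = Tr(Y^dag Phi(X)), i.e.
   Phi^*(Y)_{ab} = sum_{x,y} Y_{xy} conj(Phi(E_{ab})_{xy}). *)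
Definition hs_adjoint (d : nat) (Phi : 'M[C]_d -> 'M[C]_d) (Y : 'M[C]_d)
  : 'M[C]_d :=
  \matrix_(a, b) \sum_(x < d) \sum_(y < d) Y x y * (Phi (delta_mx a b) x y)^*.

Definition onb (d : nat) (e : 'I_d -> 'cV[C]_d) : Prop :=
  forall i j : 'I_d, \sum_(k < d) ((e i) k 0)^* * (e j) k 0 = (i == j)%:R.

Definition proj (d : nat) (v : 'cV[C]_d) : 'M[C]_d :=
  \matrix_(a, b) (v a 0 * (v b 0)^*).

(* |X><X| on C^d (x) C^d, where |X> = sum_{ij} X_{ij} |i> (x) |j> *)
Definition vec_proj (d : nat) (X : 'M[C]_d) : opT ('I_d * 'I_d)%type :=
  fun p q => X p.1 p.2 * (X q.1 q.2)^*.

(* G_{Phi,e}, zero-denominator terms omitted *)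
Definition Gmat (d : nat) (Phi : 'M[C]_d -> 'M[C]_d) (e : 'I_d -> 'cV[C]_d)
  : opT ('I_d * 'I_d)%type :=
  fun p q => \sum_(i < d)
    let A := hs_adjoint Phi (proj (e i)) in
    if \tr A == 0 then 0 else vec_proj A p q / \tr A.

Definition feasible (d N : nat) (Phi : 'I_N -> 'M[C]_d -> 'M[C]_d)
  (S : {set 'I_N}) (e : 'I_N -> 'I_d -> 'cV[C]_d) (H : opT ('I_d * 'I_d)%type)
  : Prop :=
  hermT H /\ forall i, i \in S -> psdT (fun p q => H p q - Gmat (Phi i) (e i) p q).

Definition is_val (d N : nat) (Phi : 'I_N -> 'M[C]_d -> 'M[C]_d)
  (S : {set 'I_N}) (e : 'I_N -> 'I_d -> 'cV[C]_d) (v : C) : Prop :=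
  (exists H, feasible Phi S e H /\ trT H = v) /\
  (forall H, feasible Phi S e H -> v <= trT H).

(* Main.v *)
Require Import Defs.
From HB Require Import structures.
From mathcomp Require Import all_boot all_order all_algebra.
From mathcomp Require Import complex Rstruct.
From mathcomp Require Import ring.
Import Order.TTheory GRing.Theory Num.Theory.
Local Open Scope ring_scope.
Set Implicit Arguments. Unset Strict Implicit. Unset Printing Implicit Defensive.

Definition quad (B : finType) (X : opT B) (v : B -> C) : C :=
  \sum_(i : B) \sum_(j : B) (v i)^* * X i j * v j.

Lemma sum1_at (B : finType) (f : B -> C) p :
  (forall k, k != p -> f k = 0) -> \sum_k f k = f p.
Proof. by move=> H; rewrite (bigD1 p) //= big1 ?addr0 // => k /H. Qed.

Lemma sum2_at (B : finType) (f : B -> C) p q : p != q ->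
  (forall k, k != p -> k != q -> f k = 0) -> \sum_k f k = f p + f q.
Proof.
move=> npq H; rewrite (bigD1 p) //= (bigD1 q) /=; last by rewrite eq_sym.
by rewrite big1 ?addr0 // => k /andP [kp kq]; apply: H.
Qed.

Lemma quad1 (B : finType) (X : opT B) p (a : C) :
  quad X (fun k => if k == p then a else 0) = a^* * X p p * a.
Proof.
rewrite /quad (sum1_at (p := p)) => [|k kp]; last first.
  by rewrite (negPf kp) rmorph0 big1 // => *; rewrite !mul0r.
rewrite (sum1_at (p := p)) => [|k kp]; last by rewrite (negPf kp) mulr0.
by rewrite eqxx.
Qed.

Lemma quad2 (B : finType) (X : opT B) p q (a b : C) : p != q ->
  quad X (fun k => if k == p then a else if k == q then b else 0) =
  a^* * X p p * a + a^* * X p q * b + b^* * X q p * a + b^* * X q q * b.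
Proof.
move=> npq; have nqp : q != p by rewrite eq_sym.
have v0 : forall k, k != p -> k != q ->
   (if k == p then a else if k == q then b else 0) = 0.
  by move=> k kp kq; rewrite (negPf kp) (negPf kq).
rewrite /quad (sum2_at npq) => [|k kp kq]; last first.
  by rewrite v0 // rmorph0 big1 // => *; rewrite !mul0r.
have inner : forall i, \sum_j (if i == p then a else if i == q then b else 0)^* * X i j *
    (if j == p then a else if j == q then b else 0) =
    (if i == p then a else if i == q then b else 0)^* * X i p * a +
    (if i == p then a else if i == q then b else 0)^* * X i q * b.
  move=> i; rewrite (sum2_at npq) => [|k kp kq]; last by rewrite (v0 k) // mulr0.
  by rewrite eqxx (negPf nqp) eqxx.
rewrite !inner eqxx (negPf nqp) eqxx; ring.
Qed.

Lemma psd_diag (B : finType) (X : opT B) p : psdT X -> 0 <= X p p.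
Proof. move=> H; have := H (fun k => if k == p then 1 else 0).
by rewrite -/(quad X _) quad1 rmorph1 mulr1 mul1r. Qed.

Lemma psd_herm (B : finType) (X : opT B) p q : psdT X -> X q p = (X p q)^*.
Proof.
move=> H; have [<-|npq] := eqVneq p q.
  by rewrite conj_Creal // ger0_real // psd_diag.
have Ra := ger0_real (psd_diag p H); have Rb := ger0_real (psd_diag q H).
have R2 : forall s, X p q * s + s^* * X q p \is Num.real.
  move=> s; have := H (fun k => if k == p then 1 else if k == q then s else 0).
  rewrite -/(quad X _) quad2 // rmorph1 !mul1r !mulr1 => /ger0_real hr.
  have -> : X p q * s + s^* * X q p =
     (X p p + X p q * s + s^* * X q p + s^* * X q q * s) - X p p
       - s^* * X q q * s by ring.
  rewrite rpredB // ?rpredB //.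
  have -> : s^* * X q q * s = X q q * (s * s^*) by ring.
  by rewrite rpredM // -normCK rpredX // normr_real.
have E1 := R2 1; have E2 := R2 'i.
move: E1 E2; rewrite !CrealE => /eqP E1 /eqP E2.
move: E1 E2; rewrite !rmorphD !rmorphM /= !conjCK conjCi !rmorph1 /= !mulr1 !mul1r.
set c := X p q; set c' := X q p => E1 E2.
have h2 : (2 : C) != 0 by rewrite pnatr_eq0.
apply: (mulfI h2).
move: E2; set j := 'i => E2.
have hi : j * j = -1 :> C by rewrite /j -expr2 sqrCi.
have -> : 2 * c' = 2 * c^* + ((c + c') - (c^* + c'^*)) +
   j * ((c * j + - j * c') - (c^* * - j + j * c'^*)) - ((j * j + 1) * (c - c' + c^* - c'^*)).
  ring.
by rewrite hi addNr mul0r subr0 E1 E2 !subrr mulr0 !addr0.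
Qed.

Lemma psd_minor (B : finType) (X : opT B) p q : psdT X ->
  X p q * (X p q)^* <= X p p * X q q.
Proof.
move=> H; have a0 := psd_diag p H; have b0 := psd_diag q H.
have [<-|npq] := eqVneq p q.
  by rewrite conj_Creal // ger0_real.
have hqp := psd_herm p q H.
set a := X p p in a0 *; set b := X q q in b0 *; set c := X p q in hqp *.
have ca : a^* = a by rewrite conj_Creal // ger0_real.
have n0 : 0 <= c * c^* by apply: mul_conjC_ge0.
set n := c * c^* in n0 *.
have cn : n^* = n by rewrite conj_Creal // ger0_real.
have cb : b^* = b by rewrite conj_Creal // ger0_real.
have [a_eq0|a_neq0] := eqVneq a 0.
  have := H (fun k => if k == p then - c * (b + 1) else if k == q then n else 0).
  rewrite -/(quad X _) quad2 // -/a -/b -/c hqp a_eq0 cn.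
  rewrite !rmorphM !rmorphN /= !rmorphD /= rmorph1 cb.
  have -> : - c^* * (b + 1) * 0 * (- c * (b + 1)) + - c^* * (b + 1) * c * n +
     n * c^* * (- c * (b + 1)) + n * b * n = - ((b + 2) * (n * n)) by rewrite /n; ring.
  rewrite oppr_ge0 => hle.
  have b2 : 0 < b + 2 by apply: (le_lt_trans b0); rewrite ltrDl ltr0n.
  have nn0 : n * n = 0.
    apply/eqP; rewrite eq_le mulr_ge0 // andbT.
    by move: hle; rewrite pmulr_rle0.
  move/eqP: nn0; rewrite mulf_eq0 orbb => /eqP ->.
  by rewrite mul0r.
have := H (fun k => if k == p then - c else if k == q then a else 0).
rewrite -/(quad X _) quad2 // -/a -/b -/c hqp ca rmorphN /=.
have -> : - c^* * a * - c + - c^* * c * a + a * c^* * - c + a * b * a =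
   a * (a * b - n) by rewrite /n; ring.
have apos : 0 < a by rewrite lt_def a_neq0.
by rewrite pmulr_rge0 // subr_ge0.
Qed.

Lemma mx_diag_ge0 d (A : 'M[C]_d) i : psdT (fun a b => A a b) -> 0 <= A i i.
Proof. by move=> H; apply: (psd_diag i H). Qed.

Lemma mx_tr_ge0 d (A : 'M[C]_d) : psdT (fun a b => A a b) -> 0 <= \tr A.
Proof. by move=> H; rewrite /mxtrace sumr_ge0 // => i _; apply: mx_diag_ge0. Qed.

Lemma mx_frob d (A : 'M[C]_d) : psdT (fun a b => A a b) ->
  \sum_i \sum_j A i j * (A i j)^* <= \tr A * \tr A.
Proof.
move=> H; rewrite /mxtrace mulr_suml; apply: ler_sum => i _.
rewrite mulr_sumr; apply: ler_sum => j _.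
exact: (psd_minor i j H).
Qed.

Lemma mx_tr0 d (A : 'M[C]_d) : psdT (fun a b => A a b) -> \tr A = 0 ->
  forall i j, A i j = 0.
Proof.
move=> H /eqP; rewrite /mxtrace psumr_eq0 => [|i _]; last exact: mx_diag_ge0.
move/allP => h0 i j.
have hd : forall k, A k k = 0 by move=> k; apply/eqP; apply: (h0 k); rewrite mem_index_enum.
have := psd_minor i j H; rewrite /= !hd mul0r => hle.
have : A i j * (A i j)^* = 0.
  by apply/eqP; rewrite eq_le hle mul_conjC_ge0.
by move/eqP; rewrite mul_conjC_eq0 => /eqP.
Qed.

Lemma wcs (I : finType) (P : pred I) (t c : I -> C) :
  (forall i, P i -> 0 <= t i) -> (forall i, P i -> t i = 0 -> c i = 0) ->
  (if \sum_(i | P i) t i == 0 then 0 else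
     (\sum_(i | P i) c i) * (\sum_(i | P i) c i)^* / \sum_(i | P i) t i)
  <= \sum_(i | P i) (if t i == 0 then 0 else c i * (c i)^* / t i).
Proof.
move=> t0 tc.
have r0 : 0 <= \sum_(i | P i) (if t i == 0 then 0 else c i * (c i)^* / t i).
  apply: sumr_ge0 => i Pi; case: ifP => // _.
  by rewrite divr_ge0 ?mul_conjC_ge0 ?t0.
set T := \sum_(i | P i) t i; set Cs := \sum_(i | P i) c i.
case: ifP => [//|/negbT TnZ].
have T0 : 0 <= T by apply: sumr_ge0.
have TR : T^* = T by rewrite conj_Creal // ger0_real.
set K := Cs^* / T; set K' := Cs / T; set M := Cs * Cs^* / (T * T).
set RHS := \sum_(i | P i) _.
have eq1 : RHS - Cs * Cs^* / T = \sum_(i | P i)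
   ((if t i == 0 then 0 else c i * (c i)^* / t i) - c i * K - (c i)^* * K' + t i * M).
  rewrite big_split /= !sumrB -!mulr_suml -/RHS -/Cs -/T -rmorph_sum /= -/Cs.
  rewrite /K /K' /M; field; exact: TnZ.
rewrite -subr_ge0 eq1; apply: sumr_ge0 => i Pi.
have [ti0|tinZ] := eqVneq (t i) 0.
  by rewrite ti0 (tc i Pi ti0) rmorph0 !mul0r !subr0 addr0.
have tR : (t i)^* = t i by rewrite conj_Creal // ger0_real // t0.
have -> : c i * (c i)^* / t i - c i * K - (c i)^* * K' + t i * M =
  t i * ((c i / t i - Cs / T) * (c i / t i - Cs / T)^*).
  rewrite rmorphB /= !rmorphM /= !fmorphV /= tR TR /K /K' /M.
  field; rewrite TnZ tinZ //.
by rewrite mulr_ge0 ?t0 ?mul_conjC_ge0.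
Qed.

Definition GenS d (I : finType) (A : I -> 'M[C]_d) : opT ('I_d * 'I_d)%type :=
  fun p q => \sum_x (if \tr (A x) == 0 then 0 else vec_proj (A x) p q / \tr (A x)).

Definition cv d (A : 'M[C]_d) (u : ('I_d * 'I_d)%type -> C) : C :=
  \sum_p (u p)^* * A p.1 p.2.

Lemma quad_GenS d (I : finType) (A : I -> 'M[C]_d) u :
  quad (GenS A) u = \sum_x (if \tr (A x) == 0 then 0 else
                     cv (A x) u * (cv (A x) u)^* / \tr (A x)).
Proof.
rewrite /quad /GenS.
transitivity (\sum_p \sum_x \sum_q (u p)^* *
   (if \tr (A x) == 0 then 0 else vec_proj (A x) p q / \tr (A x)) * u q).
  apply: eq_bigr => p _; rewrite exchange_big /=; apply: eq_bigr => q _.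
  by rewrite mulr_sumr mulr_suml.
rewrite exchange_big /=; apply: eq_bigr => x _.
case: ifP => hx.
  by rewrite big1 // => p _; rewrite big1 // => q _; rewrite mulr0 mul0r.
rewrite /cv rmorph_sum /= mulr_suml mulr_suml; apply: eq_bigr => p _.
rewrite mulr_sumr mulr_suml; apply: eq_bigr => q _.
rewrite /vec_proj rmorphM /= conjCK; field.
by rewrite hx.
Qed.

Lemma quadB (B : finType) (X Y : opT B) u :
  quad (fun p q => X p q - Y p q) u = quad X u - quad Y u.
Proof.
rewrite /quad -sumrB; apply: eq_bigr => i _; rewrite -sumrB.
by apply: eq_bigr => j _; rewrite mulrBr mulrBl.
Qed.

Lemma tr_sum d (I : finType) (P : pred I) (A : I -> 'M[C]_d) :
  \tr (\sum_(x | P x) A x) = \sum_(x | P x) \tr (A x).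
Proof.
rewrite /mxtrace; under eq_bigr do rewrite summxE.
by rewrite exchange_big.
Qed.

Lemma cv_sum d (I : finType) (P : pred I) (A : I -> 'M[C]_d) u :
  cv (\sum_(x | P x) A x) u = \sum_(x | P x) cv (A x) u.
Proof.
rewrite /cv; under eq_bigr do rewrite summxE mulr_sumr.
by rewrite exchange_big.
Qed.

Lemma GenS_group d (I K : finType) (f : I -> K) (A : I -> 'M[C]_d) :
  (forall x, psdT (fun a b => A x a b)) ->
  psdT (fun p q => GenS A p q - GenS (fun k => \sum_(x | f x == k) A x) p q).
Proof.
move=> HA u; rewrite -/(quad _ u) quadB subr_ge0 !quad_GenS.
rewrite (partition_big f xpredT) //=; apply: ler_sum => k _.
rewrite tr_sum cv_sum.
apply: (wcs (P := fun x => f x == k) (t := fun x => \tr (A x))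
            (c := fun x => cv (A x) u)).
  by move=> x _; apply: mx_tr_ge0.
move=> x _ h0; rewrite /cv big1 // => p _.
by rewrite (mx_tr0 (HA x) h0) mulr0.
Qed.

Lemma GenS_herm d (I : finType) (A : I -> 'M[C]_d) :
  (forall x, psdT (fun a b => A x a b)) -> hermT (GenS A).
Proof.
move=> HA p q; rewrite /GenS rmorph_sum; apply: eq_bigr => x _.
case: ifP => hx; first by rewrite rmorph0.
have tR : (\tr (A x))^* = \tr (A x) by rewrite conj_Creal // ger0_real // mx_tr_ge0.
have tRV : ((\tr (A x))^-1)^* = (\tr (A x))^-1.
  by rewrite conj_Creal // rpredV ger0_real // mx_tr_ge0.
by rewrite /vec_proj !rmorphM /= conjCK tRV [X in X / _]mulrC.
Qed.

Lemma GenS_tr d (I : finType) (A : I -> 'M[C]_d) :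
  (forall x, psdT (fun a b => A x a b)) ->
  trT (GenS A) <= \sum_x \tr (A x).
Proof.
move=> HA; rewrite /trT /GenS exchange_big /=; apply: ler_sum => x _.
case hx : (\tr (A x) == 0).
  by rewrite big1 ?mx_tr_ge0.
have tpos : 0 < \tr (A x) by rewrite lt_def hx mx_tr_ge0.
rewrite -mulr_suml ler_pdivrMr //.
rewrite /vec_proj -(pair_big xpredT xpredT (fun i j => A x i j * (A x i j)^*)) /=.
exact: mx_frob.
Qed.

Section Lin.
Variables (d : nat) (B : finType) (L : 'M[C]_d -> opT B).
Hypothesis hL : lin_mapT L.

Lemma lin0 i j : L 0 i j = 0.
Proof.
have := hL 1 0 0 i j; rewrite scale1r addr0 mul1r => h.
by apply: (@addrI _ (L 0 i j)); rewrite addr0 -h.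
Qed.

Lemma linD X Y i j : L (X + Y) i j = L X i j + L Y i j.
Proof. by have := hL 1 X Y i j; rewrite scale1r mul1r. Qed.

Lemma linZ a X i j : L (a *: X) i j = a * L X i j.
Proof. by have := hL a X 0 i j; rewrite !addr0 lin0 addr0. Qed.

Lemma lin_sum (I : finType) (P : pred I) (F : I -> 'M[C]_d) i j :
  L (\sum_(x | P x) F x) i j = \sum_(x | P x) L (F x) i j.
Proof.
apply: (big_rec2 (fun X s => L X i j = s)); first exact: lin0.
by move=> x X s _ <-; rewrite linD.
Qed.
End Lin.

Lemma swap4 (I1 I2 I3 I4 : finType) (F : I1 -> I2 -> I3 -> I4 -> C) :
  \sum_a \sum_b \sum_y \sum_z F a b y z = \sum_y \sum_z \sum_a \sum_b F a b y z.
Proof.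
transitivity (\sum_a \sum_y \sum_b \sum_z F a b y z).
  by apply: eq_bigr => a _; rewrite exchange_big.
transitivity (\sum_a \sum_y \sum_z \sum_b F a b y z).
  by apply: eq_bigr => a _; apply: eq_bigr => y _; rewrite exchange_big.
rewrite exchange_big; apply: eq_bigr => y _; by rewrite exchange_big.
Qed.

Lemma sum_pair1 (B : finType) (f : (B * 'I_1)%type -> C) :
  \sum_p f p = \sum_y f (y, ord0).
Proof.
have -> : \sum_p f p = \sum_y \sum_k f (y, k).
  by rewrite pair_bigA; apply: eq_bigr => -[y k].
by apply: eq_bigr => y _; rewrite big_ord1.
Qed.

Lemma Apsd d (B : finType) (L : 'M[C]_d -> opT B) (w : B -> C) :
  lin_mapT L -> cp_mapT L ->
  psdT (fun a b => (\matrix_(a0, b0) \sum_y \sum_z (w y * (w z)^*) *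
           (L (delta_mx a0 b0) y z)^* : 'M[C]_d) a b).
Proof.
move=> hlin hcp v.
set V : 'M[C]_d := \matrix_(a, b) (v a * (v b)^*).
have hV : psdT (fun p q : ('I_d * 'I_1)%type => V p.1 q.1).
  move=> u; set s := \sum_p (u p)^* * v p.1.
  have -> : \sum_p \sum_q (u p)^* * V p.1 q.1 * u q = s * s^*.
    rewrite /s rmorph_sum mulr_suml; apply: eq_bigr => p _.
    rewrite mulr_sumr; apply: eq_bigr => q _.
    rewrite mxE rmorphM /= conjCK; ring.
  exact: mul_conjC_ge0.
have /= := hcp 1%N (fun p q => V p.1 q.1) hV (fun p => w p.1).
have -> : (\matrix_(a, b) V a b : 'M[C]_d) = V.
  by apply/matrixP => a b; rewrite mxE.
rewrite sum_pair1 /= => h.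
set Q := \sum_y \sum_z (w y)^* * L V y z * w z.
have hQ : 0 <= Q.
  apply: (le_trans h); rewrite le_eqVlt; apply/orP; left; apply/eqP.
  by apply: eq_bigr => y _; rewrite sum_pair1.
have LV : forall y z, L V y z = \sum_a \sum_b (v a * (v b)^*) * L (delta_mx a b) y z.
  move=> y z; rewrite {1}(matrix_sum_delta V) (lin_sum hlin).
  apply: eq_bigr => a _; rewrite (lin_sum hlin); apply: eq_bigr => b _.
  by rewrite (linZ hlin) mxE.
have -> : \sum_(i < d) \sum_(j < d) (v i)^* *
     (\matrix_(a0, b0) \sum_y \sum_z w y * (w z)^* * (L (delta_mx a0 b0) y z)^* : 'M[C]_d) i j * v j
   = Q^*.
  transitivity (\sum_a \sum_b \sum_y \sum_z
      (v a)^* * v b * w y * (w z)^* * (L (delta_mx a b) y z)^*).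
    apply: eq_bigr => a _; apply: eq_bigr => b _.
    rewrite mxE mulr_sumr mulr_suml; apply: eq_bigr => y _.
    rewrite mulr_sumr mulr_suml; apply: eq_bigr => z _; ring.
  rewrite swap4 /Q rmorph_sum; apply: eq_bigr => y _.
  rewrite rmorph_sum; apply: eq_bigr => z _.
  rewrite LV !rmorphM /= conjCK rmorph_sum mulr_sumr mulr_suml; apply: eq_bigr => a _.
  rewrite rmorph_sum mulr_sumr mulr_suml; apply: eq_bigr => b _.
  rewrite !rmorphM /= conjCK; ring.
by rewrite conj_Creal // ger0_real.
Qed.

Lemma onb_compl d (e : 'I_d -> 'cV[C]_d) : onb e ->
  forall u v, \sum_c e c u 0 * (e c v 0)^* = (u == v)%:R.
Proof.
move=> he u v.
set M : 'M[C]_d := \matrix_(k, i) e i k 0.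
set Mc : 'M[C]_d := \matrix_(i, k) (e i k 0)^*.
have h1 : Mc *m M = 1%:M.
  apply/matrixP => i j; rewrite !mxE -he.
  by apply: eq_bigr => k _; rewrite !mxE.
have := mulmx1C h1 => /matrixP /(_ u v); rewrite !mxE => <-.
by apply: eq_bigr => c _; rewrite !mxE.
Qed.

Lemma part_sum (T K : finType) (f : T -> K) (P : pred T) (G : K -> T -> C) :
  \sum_k \sum_(t | (f t == k) && P t) G k t = \sum_(t | P t) G (f t) t.
Proof.
rewrite (partition_big f xpredT) //=; apply: eq_bigr => k _.
apply: eq_big => [t|t /andP [/eqP -> _]] //; by rewrite andbC.
Qed.


Lemma part_sum1 (T K : finType) (f : T -> K) (G : K -> T -> C) :
  \sum_k \sum_(t | f t == k) G k t = \sum_t G (f t) t.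
Proof.
rewrite -(part_sum f xpredT); apply: eq_bigr => k _.
by apply: eq_bigl => t; rewrite andbT.
Qed.

Lemma prod_nat (J : finType) (P : pred J) (b : J -> bool) :
  \prod_(j | P j) ((b j)%:R : C) = ([forall j, P j ==> b j])%:R.
Proof.
case: (boolP [forall j, P j ==> b j]) => H.
  by rewrite big1 // => j Pj; move/forallP/(_ j): H; rewrite Pj /= => ->.
move: H; rewrite negb_forall => /existsP [j]; rewrite negb_imply => /andP [Pj nb].
by rewrite (bigD1 j) //= (negPf nb) mul0r.
Qed.

Definition wv d (J : finType) (ee : J -> 'I_d -> 'cV[C]_d) (x y : {ffun J -> 'I_d}) : C :=
  \prod_j ee j (x j) (y j) 0.

Definition Ax d (J : finType) (L : 'M[C]_d -> opT {ffun J -> 'I_d})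
  (ee : J -> 'I_d -> 'cV[C]_d) (x : {ffun J -> 'I_d}) : 'M[C]_d :=
  \matrix_(a0, b0) \sum_y \sum_z (wv ee x y * (wv ee x z)^*) * (L (delta_mx a0 b0) y z)^*.

Lemma key_sum d (J : finType) (ee : J -> 'I_d -> 'cV[C]_d) j0 a y z :
  (forall j, onb (ee j)) ->
  \sum_(x : {ffun J -> 'I_d} | x j0 == a) wv ee x y * (wv ee x z)^* =
  ([forall j, (j != j0) ==> (y j == z j)])%:R * (ee j0 a (y j0) 0 * (ee j0 a (z j0) 0)^*).
Proof.
move=> he.
pose Q := fun (j : J) (c : 'I_d) => (j == j0) ==> (c == a).
pose f := fun (j : J) (c : 'I_d) => ee j c (y j) 0 * (ee j c (z j) 0)^*.
transitivity (\sum_(x in family Q) \prod_j f j (x j)).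
  apply: eq_big => [x|x _].
    apply/idP/familyP => [/eqP xa j|H].
      by rewrite unfold_in /Q; case: eqP => //= ->; rewrite xa.
    by have := H j0; rewrite unfold_in /Q eqxx.
  by rewrite /wv rmorph_prod -big_split.
rewrite -bigA_distr_big_dep (bigD1 j0) //= mulrC; congr (_ * _); last first.
  rewrite (big_pred1 a); last by move=> c; rewrite /Q eqxx.
  by [].
rewrite -prod_nat; apply: eq_bigr => j jn.
rewrite /Q (negPf jn) /=; exact: onb_compl.
Qed.

Lemma marg d (J : finType) (L : 'M[C]_d -> opT {ffun J -> 'I_d})
  (ee : J -> 'I_d -> 'cV[C]_d) j0 a : (forall j, onb (ee j)) ->
  hs_adjoint (fun X => marginal (L X) j0) (proj (ee j0 a)) =
  \sum_(x : {ffun J -> 'I_d} | x j0 == a) Ax L ee x.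
Proof.
move=> he; apply/matrixP => a' b'; rewrite summxE mxE.
set E := delta_mx a' b'.
set ag := fun y z : {ffun J -> 'I_d} => [forall j, (j != j0) ==> (y j == z j)].
set ca := fun u w : 'I_d => ee j0 a u 0 * (ee j0 a w 0)^*.
transitivity (\sum_u \sum_(y : {ffun J -> 'I_d} | y j0 == u) \sum_w
    \sum_(z : {ffun J -> 'I_d} | (z j0 == w) && ag y z)
    ca u w * (L E y z)^*).
  apply: eq_bigr => u _.
  rewrite [RHS]exchange_big /=; apply: eq_bigr => w _.
  rewrite !mxE rmorph_sum mulr_sumr; apply: eq_bigr => y _.
  by rewrite rmorph_sum mulr_sumr.
rewrite part_sum1.
transitivity (\sum_(y : {ffun J -> 'I_d}) \sum_(z : {ffun J -> 'I_d}) (ag y z)%:R * ca (y j0) (z j0) * (L E y z)^*).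
  apply: eq_bigr => y _; rewrite part_sum big_mkcond /=.
  apply: eq_bigr => z _; rewrite /ag; case: [forall _, _] => /=.
    by rewrite mul1r.
  by rewrite !mul0r.
transitivity (\sum_(y : {ffun J -> 'I_d}) \sum_(z : {ffun J -> 'I_d})
   \sum_(x : {ffun J -> 'I_d} | x j0 == a) (wv ee x y * (wv ee x z)^*) * (L E y z)^*).
  apply: eq_bigr => y _; apply: eq_bigr => z _.
  by rewrite -mulr_suml key_sum.
under eq_bigr do rewrite exchange_big /=.
rewrite exchange_big /=; apply: eq_bigr => x _.
by rewrite mxE.
Qed.

Lemma tr_delta d (b : 'I_d) : \tr (delta_mx b b : 'M[C]_d) = 1.
Proof.
rewrite /mxtrace (sum1_at (p := b)) => [|k kb]; first by rewrite mxE eqxx.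
by rewrite mxE (negPf kb).
Qed.

Lemma sum_tr_adj d (Phi : 'M[C]_d -> 'M[C]_d) (e : 'I_d -> 'cV[C]_d) :
  channel Phi -> onb e -> \sum_a \tr (hs_adjoint Phi (proj (e a))) = d%:R.
Proof.
move=> [_ _ htp] he.
transitivity (\sum_b \sum_u \sum_w (\sum_a e a u 0 * (e a w 0)^*) *
                (Phi (delta_mx b b) u w)^*).
  rewrite /mxtrace exchange_big /=; apply: eq_bigr => b _.
  under eq_bigr do rewrite mxE.
  rewrite exchange_big /=; apply: eq_bigr => u _.
  rewrite exchange_big /=; apply: eq_bigr => w _.
  by rewrite mulr_suml; apply: eq_bigr => a _; rewrite mxE.
transitivity (\sum_(b < d) (1 : C)); last by rewrite sumr_const card_ord.
apply: eq_bigr => b _.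
transitivity (\sum_u (Phi (delta_mx b b) u u)^*).
  apply: eq_bigr => u _; rewrite (sum1_at (p := u)) => [|w wu].
    by rewrite onb_compl // eqxx mul1r.
  by rewrite onb_compl // eq_sym (negPf wu) mul0r.
rewrite -rmorph_sum; have := htp (delta_mx b b); rewrite /trT /= => ->.
by rewrite tr_delta rmorph1.
Qed.

Lemma hs_adjoint_ext d (Phi Psi : 'M[C]_d -> 'M[C]_d) Y :
  (forall X, Phi X = Psi X) -> hs_adjoint Phi Y = hs_adjoint Psi Y.
Proof.
move=> h; apply/matrixP => a b; rewrite !mxE; apply: eq_bigr => x _.
by apply: eq_bigr => y _; rewrite h.
Qed.

Lemma psd_ext (B : finType) (X Y : opT B) :
  (forall p q, X p q = Y p q) -> psdT Y -> psdT X.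
Proof.
move=> h hY u; have := hY u.
by under eq_bigr do under eq_bigr do rewrite -h.
Qed.

Lemma core d N (Phi : 'I_N -> 'M[C]_d -> 'M[C]_d) (S : {set 'I_N})
  (e : 'I_N -> 'I_d -> 'cV[C]_d) (v : C) :
  (forall i, channel (Phi i)) -> (exists i, i \in S) ->
  compatible (subfam Phi S) ->
  (forall i, i \in S -> onb (e i)) -> is_val Phi S e v -> v <= d%:R.
Proof.
move=> hch [i0 Hi0] [L [[hlin hcp _] hmarg]] he [_ hmin].
pose ee := fun j : {i : 'I_N | i \in S} => e (val j).
have hee : forall j, onb (ee j) by move=> j; apply: he; exact: (valP j).
pose H := GenS (Ax L ee).
have Apsd' : forall x, psdT (fun a b => Ax L ee x a b).
  by move=> x; exact: (Apsd (wv ee x) hlin hcp).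
have hG : forall i (Hi : i \in S) p q, Gmat (Phi i) (e i) p q =
    GenS (fun k => \sum_(x : {ffun _ -> 'I_d} | x (exist _ i Hi) == k) Ax L ee x) p q.
  move=> i Hi p q; rewrite /Gmat /GenS; apply: eq_bigr => k _.
  rewrite -(@marg _ _ L ee (exist _ i Hi) k hee).
  rewrite (@hs_adjoint_ext _ (Phi i) (fun X => marginal (L X) (exist _ i Hi))) // => X.
have feas : feasible Phi S e H.
  split; first exact: GenS_herm.
  move=> i Hi; apply: (psd_ext (Y := fun p q => GenS (Ax L ee) p q -
     GenS (fun k => \sum_(x : {ffun _ -> 'I_d} | x (exist _ i Hi) == k) Ax L ee x) p q)).
    by move=> p q; rewrite hG.
  exact: GenS_group.
apply: (le_trans (hmin H feas)); apply: (le_trans (GenS_tr Apsd')).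
rewrite (partition_big (fun x : {ffun _ -> 'I_d} => x (exist _ i0 Hi0)) xpredT) //=.
rewrite -(sum_tr_adj (hch i0) (he i0 Hi0)) le_eqVlt; apply/orP; left; apply/eqP.
apply: eq_bigr => k _; rewrite -tr_sum.
rewrite -(@marg _ _ L ee (exist _ i0 Hi0) k hee).
rewrite (@hs_adjoint_ext _ (Phi i0) (fun X => marginal (L X) (exist _ i0 Hi0))) // => X.
Qed.

Unset Implicit Arguments.

Theorem theorem6p2 (d N K : nat) (Phi : 'I_N -> 'M[C]_d -> 'M[C]_d) :
  (forall i, channel (Phi i)) -> (1 <= K <= N)%N ->
  ((exists (S : {set 'I_N}) (e : 'I_N -> 'I_d -> 'cV[C]_d) (v : C),
      [/\ #|S| = K, (forall i, i \in S -> onb (e i)),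
          is_val Phi S e v & d%:R < v]) ->
     NK_incompatible K Phi) /\
  ((forall S : {set 'I_N}, #|S| = K ->
      exists (e : 'I_N -> 'I_d -> 'cV[C]_d) (v : C),
        [/\ (forall i, i \in S -> onb (e i)), is_val Phi S e v & d%:R < v]) ->
     NK_strong_incompatible K Phi).
Proof.
move=> hch /andP [hK _].
have ne : forall S : {set 'I_N}, #|S| = K -> exists i, i \in S.
  by move=> S hS; apply/card_gt0P; rewrite hS.
split.
  move=> [S [e [v [hS he hv hlt]]]]; exists S; split => // hc.
  have := lt_le_trans hlt (core hch (ne S hS) hc he hv).
  by rewrite ltxx.
move=> H S hS hc; have [e [v [he hv hlt]]] := H S hS.
have := lt_le_trans hlt (core hch (ne S hS) hc he hv).
by rewrite ltxx.
Qed.
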